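(* For any integer $g\ge 0$, \[\sum_{S\in\mathcal{B}(g)}e_2(S)\le 2F_{g+1},\] where $F_n$ denotes the $n$-th Fibonacci number ($F_1=F_2=1$, $F_{n+2}=F_{n+1}+F_n$).
   Context: A numerical semigroup $S$ is a submonoid of $\mathbb{N}_0$ with finite complement; its genus is the size of the complement, $m(S)$ is its smallest nonzero element, $F(S)$ is the largest element of the complement (Frobenius number), and $e(S)$ is the size of its minimal generating set $(S\setminus\{0\})\setminus((S\setminus\{0\})+(S\setminus\{0\}))$. Define $e_1(S)=\#([m(S),2m(S)-1]\cap S)$ and $e_2(S)=e(S)-e_1(S)$. $\mathcal{B}(g)$ is the set of numerical semigroups $S$ of genus $g$ with $F(S)<2m(S)$. *)

(* Defs.v *)
From mathcomp Require Import all_boot.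
Set Implicit Arguments. Unset Strict Implicit. Unset Printing Implicit Defensive.

(* A numerical semigroup S is represented by its set of gaps N_0 \ S,
   given as a strictly increasing (hence canonical) finite list G. *)

Definition inS (G : seq nat) (x : nat) : bool := x \notin G.

(* S = N_0 \ G is a submonoid of N_0 (finite complement is automatic). *)
Definition is_numsg (G : seq nat) : Prop :=
  sorted ltn G /\ inS G 0 /\
  (forall x y, inS G x -> inS G y -> inS G (x + y)).

Definition genus (G : seq nat) : nat := size G.

(* Frobenius number: largest gap (only used when G is nonempty). *)
Definition frob (G : seq nat) : nat := \max_(x <- G) x.

(* multiplicity m(S): the smallest nonzero element of S.  The search range
   1 .. frob G + 1 always contains an element of S (namely frob G + 1). *)
Definition mult (G : seq nat) : nat :=
  head 0 [seq x <- iota 1 (frob G).+1 | inS G x].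

Definition min_gen (G : seq nat) (x : nat) : bool :=
  [&& 0 < x, inS G x &
      ~~ has (fun a => inS G a && inS G (x - a)) (iota 1 x.-1)].

(* All minimal
   generators are <= frob G + mult G (any larger x equals m + (x - m) with
   x - m > F in S), so counting over 1 .. frob G + 2 mult G is exhaustive. *)
Definition edim (G : seq nat) : nat :=
  count (min_gen G) (iota 1 (frob G + 2 * mult G)).

Definition e1 (G : seq nat) : nat :=
  count (inS G) (iota (mult G) (mult G)).

Definition e2 (G : seq nat) : nat := edim G - e1 G.

(* S in B(g): numerical semigroup of genus g with F(S) < 2 m(S),
   i.e. every gap is < 2 m(S) (vacuous for S = N_0, where F = -1). *)
Definition inB (g : nat) (G : seq nat) : Prop :=
  is_numsg G /\ genus G = g /\ all (fun x => x < 2 * mult G) G.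

Fixpoint fib (n : nat) : nat :=
  match n with
  | 0 => 0
  | 1 => 1
  | (k.+1 as n').+1 => fib n' + fib k
  end.

(* Main.v *)
Require Import Defs.
From mathcomp Require Import all_boot zify.
Set Implicit Arguments. Unset Strict Implicit. Unset Printing Implicit Defensive.

Fixpoint wt (s : seq bool) : nat :=
  match s with [::] => 0 | b :: s' => (if b then 1 else 2) + wt s' end.

Fixpoint astrs (n : nat) : seq (seq bool) :=
  match n with
  | 0 => [:: [::]]
  | 1 => [:: [:: true]]
  | (k.+1 as n').+1 => map (cons true) (astrs n') ++ map (cons false) (astrs k)
  end.

Lemma cons_inj (b : bool) : injective (cons b).
Proof. by move=> x y []. Qed.

Lemma astrs_complete s : s \in astrs (wt s).
Proof.
elim: s => [|b s IH] //=.
case: b => /=.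
  move: IH; case: (wt s) => [|k] /=.
    by rewrite mem_seq1 => /eqP ->.
  by move=> H; rewrite mem_cat (mem_map (@cons_inj true)) H.
by rewrite mem_cat (mem_map (@cons_inj false)) IH orbT.
Qed.

Lemma size_astrs n : size (astrs n) = fib n.+1.
Proof.
elim: n {-2}n (leqnn n) => [|n IH] [|[|k]] // Hk.
have -> : astrs k.+2 = map (cons true) (astrs k.+1) ++ map (cons false) (astrs k) by [].
have -> : fib k.+3 = fib k.+2 + fib k.+1 by [].
rewrite size_cat !size_map !IH //; rewrite ltnS in Hk; try exact: ltnW (ltnW Hk); try exact: ltnW Hk.
Qed.

Fixpoint vq (n : nat) : seq (seq bool) :=
  match n with
  | 0 => [:: [::]]
  | 1 => [::]
  | 2 => [:: [:: false]]
  | m.+3 => [seq true :: rcons q false | q <- vq m] ++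
            [seq false :: rcons q true | q <- vq m] ++
            (if m is k.+1 then [seq false :: rcons q false | q <- vq k] else [::])
  end.

Definition K n := size (vq n).

Lemma K_rec m : K m.+4 = 2 * K m.+1 + K m.
Proof. by rewrite /K /= !size_cat !size_map; lia. Qed.

Definition pd (q : seq bool) : Prop :=
  forall i, i < size q -> ~~ (nth false q i && nth false q (size q - 1 - i)).

Lemma wt_rcons q b : wt (rcons q b) = wt q + (if b then 1 else 2).
Proof. by elim: q => [|a q IH] /=; rewrite ?addn0 // IH addnA. Qed.

Lemma vq_complete q : pd q -> q \in vq (wt q).
Proof.
have [n Hn] : exists n, size q <= n by exists (size q).
elim: n q Hn => [|n IH] q.
  by rewrite leqn0 => /nilP ->.
case: q => [|a q] //= Hs Hpd.
case/lastP: q Hs Hpd => [|q b] Hs Hpd.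
  have := Hpd 0 isT; rewrite /= => Ha.
  by clear Hpd; case: a Ha.
have Hab : ~~ (a && b).
  have := Hpd 0 isT; rewrite /= size_rcons subn1 /= nth_rcons ltnn eqxx.
  by [].
have Hq : pd q.
  move=> i Hi; have := Hpd i.+1; rewrite /= size_rcons ltnS ltnW //.
  rewrite !nth_rcons Hi subSS.
  have -> : (size q).+1 - 0 - i.+1 = (size q - 1 - i).+1 by lia.
  rewrite /= nth_rcons.
  have -> : size q - 1 - i < size q by lia.
  by move=> /(_ isT).
have IHq : q \in vq (wt q).
  apply: IH => //; rewrite size_rcons ltnS in Hs; exact: ltnW.
rewrite wt_rcons.
clear Hs Hpd; case: a b Hab => [] [] // _.
- rewrite [X in vq X](_ : _ = (wt q).+3); last by rewrite /=; lia.
  by rewrite /= mem_cat; apply/orP; left; apply/mapP; exists q.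
- rewrite [X in vq X](_ : _ = (wt q).+3); last by rewrite /=; lia.
  by rewrite /= !mem_cat; apply/orP; right; apply/orP; left; apply/mapP; exists q.
- rewrite [X in vq X](_ : _ = (wt q).+1.+3); last by rewrite /=; lia.
  by rewrite /= !mem_cat; apply/orP; right; apply/orP; right; apply/mapP; exists q.
Qed.

Definition D n := \sum_(0 <= j < n) K j * fib (n - j).

Lemma D_rec n : D n.+2 = D n.+1 + D n + K n.+1.
Proof.
rewrite /D !big_nat_recr //=.
have -> : n.+2 - n = 2 by lia.
have -> : n.+2 - n.+1 = 1 by lia.
have -> : n.+1 - n = 1 by lia.
have E : \sum_(0 <= j < n) K j * fib (n.+2 - j) =
         \sum_(0 <= j < n) K j * fib (n.+1 - j) + \sum_(0 <= j < n) K j * fib (n - j).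
  rewrite -big_split /=; apply: eq_big_nat => j /andP [_ Hj].
  have -> : n.+2 - j = (n - j).+2 by lia.
  have -> : n.+1 - j = (n - j).+1 by lia.
  by rewrite -mulnDr.
rewrite E /=; lia.
Qed.

Definition S3 n := K n + K n.+1 + K n.+2.

Lemma Q n : 6 <= n -> K n.+1 + S3 n.+2 <= S3 n.+1 + S3 n.
Proof.
rewrite /S3.
have [N HN] : exists N, n <= N by exists n.
elim: N n HN => [|N IH] n HN Hn; first by lia.
case: (ltnP n 10) => Hn10.
  have : n \in [:: 6; 7; 8; 9] by rewrite !inE; lia.
  by rewrite !inE => /or4P [] /eqP ->; vm_compute.
have H3 := IH (n - 3) ltac:(lia) ltac:(lia).
have H4 := IH (n - 4) ltac:(lia) ltac:(lia).
have -> : n = (n - 10).+4.+3.+3 by lia.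
move: H3 H4; have -> : n - 3 = (n - 10).+4.+3 by lia.
have -> : n - 4 = (n - 10).+3.+3 by lia.
set m := n - 10.
rewrite ![K (_.+4)]K_rec.
lia.
Qed.

Lemma Dinv n : D n + S3 n <= 2 * fib n.+2.
Proof.
have [N HN] : exists N, n <= N by exists n.
elim: N n HN => [|N IH] n HN; (case: (ltnP n 8) => Hn8; [ | ]); [ | by lia | |].
1,2: by clear -Hn8; move: Hn8; case: n => [|[|[|[|[|[|[|[|n]]]]]]]] // _; rewrite /D unlock; vm_compute.
have H1 := IH (n - 1) ltac:(lia).
have H2 := IH (n - 2) ltac:(lia).
have HQ := Q (n := n - 2) ltac:(lia).
move: H1 H2 HQ.
have -> : n = (n - 2).+2 by lia.
have -> : (n - 2).+2 - 1 = (n - 2).+1 by lia.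
have -> : (n - 2).+2 - 2 = n - 2 by lia.
set m := n - 2.
rewrite D_rec.
have -> : fib m.+4 = fib m.+3 + fib m.+2 by [].
lia.
Qed.

Lemma Dbound n : D n <= 2 * fib n.+2.
Proof. by apply: leq_trans (Dinv n); apply: leq_addr. Qed.

Lemma frob_ge G x : x \in G -> x <= frob G.
Proof. by move=> Hx; rewrite /frob; apply: (@leq_bigmax_seq _ _ predT (fun y => y) x Hx). Qed.

Lemma head_filter_iota (p : pred nat) a n : has p (iota a n) ->
  let h := head 0 [seq x <- iota a n | p x] in
  [/\ a <= h, h < a + n, p h & forall x, a <= x < h -> ~~ p x].
Proof.
elim: n a => [|n IH] a //=.
case Pa: (p a) => /=.
  by move=> _; split => //; [rewrite addnS ltnS leq_addr | lia].
move=> /IH [H1 H2 H3 H4]; split => //; first by lia.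
  by rewrite addnS -addSn.
move=> x /andP [Hax Hxh]; case: (ltngtP a x) => Hx.
- by apply: H4; rewrite Hx.
- by lia.
- by rewrite -Hx Pa.
Qed.

Lemma mult_props G :
  [/\ 1 <= mult G, inS G (mult G) & forall x, 0 < x < mult G -> x \in G].
Proof.
have Hh : has (inS G) (iota 1 (frob G).+1).
  apply/hasP; exists (frob G).+1; first by rewrite mem_iota; lia.
  by rewrite /inS; apply/negP => /frob_ge; rewrite ltnn.
have [H1 H2 H3 H4] := head_filter_iota Hh.
split => // x /andP [Hx0 Hx]; have := H4 x; rewrite /mult Hx0 Hx /inS negbK.
by move=> /(_ isT).
Qed.

Lemma count_sub (p : pred nat) s t : uniq s -> uniq t ->
  (forall x, x \in s -> p x -> x \in t) -> count p s <= count p t.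
Proof.
move=> Us Ut H; rewrite -!size_filter; apply: uniq_leq_size; first exact: filter_uniq.
by move=> x; rewrite !mem_filter => /andP [px xs]; rewrite px H.
Qed.

Lemma size_count G N : uniq G -> (forall x, x \in G -> x < N) ->
  size G = count (mem G) (iota 0 N).
Proof.
move=> UG HN; rewrite -size_filter; apply/eqP; rewrite eqn_leq; apply/andP; split.
  apply: uniq_leq_size => // x Hx; rewrite mem_filter /= Hx mem_iota /=.
  exact: HN.
apply: uniq_leq_size; first by apply: filter_uniq; exact: iota_uniq.
by move=> x; rewrite mem_filter => /andP [].
Qed.

Lemma wt_size_count s : wt s = size s + count negb s.
Proof. by elim: s => [|[] s IH] //=; rewrite IH; lia. Qed.

Lemma wt_cat s t : wt (s ++ t) = wt s + wt t.
Proof. by elim: s => [|b s IH] //=; rewrite IH addnA. Qed.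

Lemma inB_facts g G : inB g G ->
  [/\ sorted ltn G, 0 \notin G, size G = g & forall x, x \in G -> x < 2 * mult G].
Proof. by case=> [[H1 [H2 _]] [H3 /allP H4]]. Qed.

Definition sG G := [seq inS G (mult G + i) | i <- iota 0 (mult G)].

Lemma size_sG G : size (sG G) = mult G.
Proof. by rewrite size_map size_iota. Qed.

Lemma nth_sG G i : i < mult G -> nth false (sG G) i = inS G (mult G + i).
Proof. by move=> Hi; rewrite (nth_map 0) ?size_iota // nth_iota. Qed.

Lemma memG g G z : inB g G -> (z \in G) =
  (0 < z < mult G) || ((mult G <= z < 2 * mult G) && ~~ nth false (sG G) (z - mult G)).
Proof.
case/inB_facts => _ H0 _ H2m; have [M1 Mm Mlt] := mult_props G.
case: (posnP z) => [->|Hz]; first by rewrite (negbTE H0) /= (leqNgt (mult G) 0) M1.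
case: (ltnP z (mult G)) => Hzm /=.
  by apply: Mlt; rewrite Hz Hzm.
case: (ltnP z (2 * mult G)) => Hz2 /=.
  by rewrite nth_sG; [rewrite subnKC // /inS negbK | rewrite ltn_subLR //; lia].
by apply/negbTE/negP => /H2m; rewrite ltnNge Hz2.
Qed.

Lemma sG_inj g g' G G' : inB g G -> inB g' G' -> sG G = sG G' -> G = G'.
Proof.
move=> HG HG' E.
have Em : mult G = mult G' by rewrite -size_sG E size_sG.
have [S1 _ _ _] := inB_facts HG; have [S2 _ _ _] := inB_facts HG'.
apply: (irr_sorted_eq ltn_trans ltnn) => // z.
by rewrite (memG z HG) (memG z HG') E Em.
Qed.

Lemma wt_sG g G : inB g G -> wt (sG G) = g.+1.
Proof.
move=> HG; have [S1 H0 Hg H2m] := inB_facts HG; have [M1 Mm Mlt] := mult_props G.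
rewrite wt_size_count size_sG count_map.
have UG : uniq G by apply: (sorted_uniq ltn_trans ltnn).
have := size_count UG H2m; rewrite Hg => ->.
have -> : 2 * mult G = 1 + (mult G - 1) + mult G by lia.
rewrite !iotaD count_cat /= (negbTE H0) /=.
rewrite (@eq_in_count _ _ predT (iota 1 _)); last first.
  by move=> x; rewrite mem_iota => Hx; apply: Mlt; lia.
rewrite count_predT size_iota.
have -> : 0 + (1 + (mult G - 1)) = mult G + 0 by lia.
rewrite iotaDl count_map.
have -> : count (mem G \o addn (mult G)) (iota 0 (mult G)) =
          count (preim (fun i => inS G (mult G + i)) negb) (iota 0 (mult G)).
  by apply: eq_count => i /=; rewrite /inS negbK.
lia.
Qed.

Lemma mg_no G x a : min_gen G x -> 0 < a < x -> inS G a -> inS G (x - a) -> False.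
Proof.
case/and3P => Hx _ /hasPn H Ha Sa Sxa.
have : a \in iota 1 x.-1 by rewrite mem_iota; lia.
by move=> /H; rewrite Sa Sxa.
Qed.

Lemma inS_big g G z : inB g G -> 2 * mult G <= z -> inS G z.
Proof.
case/inB_facts => _ _ _ H2m Hz; apply/negP => /H2m; lia.
Qed.

Lemma mg_lt3 g G x : inB g G -> min_gen G x -> x < 3 * mult G.
Proof.
move=> HG Hmg; have [M1 Mm Mlt] := mult_props G.
rewrite ltnNge; apply/negP => Hx.
apply: (mg_no (a := mult G) Hmg) => //; first by lia.
apply: (inS_big HG); lia.
Qed.

Lemma e2_le g G : inB g G -> e2 G <= count (min_gen G) (iota (2 * mult G) (mult G)).
Proof.
move=> HG; have [M1 Mm Mlt] := mult_props G.
have [_ H0 _ H2m] := inB_facts HG.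
have H1 : edim G <= count (min_gen G) (iota 0 (3 * mult G)).
  rewrite /edim; apply: count_sub; try exact: iota_uniq.
  move=> x _ Hx; rewrite mem_iota /=; exact: mg_lt3 HG Hx.
rewrite (_ : 3 * mult G = mult G + mult G + mult G) in H1; last by lia.
move: H1; rewrite !iotaD !count_cat.
have -> : count (min_gen G) (iota 0 (mult G)) = 0.
  rewrite (@eq_in_count _ _ pred0) ?count_pred0 // => x; rewrite mem_iota => Hx /=.
  apply/negP => /and3P [Hx0 HxS _].
  by move: HxS; rewrite /inS Mlt //; lia.
have -> : count (min_gen G) (iota (0 + mult G) (mult G)) = e1 G.
  rewrite /e1 add0n; apply: eq_in_count => x; rewrite mem_iota => Hx.
  apply/idP/idP; first by case/and3P.
  move=> Sx; apply/and3P; split => //; first by lia.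
  apply/hasPn => a; rewrite mem_iota => Ha; apply/negP => /andP [Sa Sxa].
  have Ham : mult G <= a.
    rewrite leqNgt; apply/negP => Ham; move: Sa; rewrite /inS Mlt //; lia.
  have Hxam : mult G <= x - a.
    rewrite leqNgt; apply/negP => Ham2; move: Sxa; rewrite /inS Mlt //; lia.
  lia.
rewrite /e2 add0n (_ : mult G + mult G = 2 * mult G); last by lia.
rewrite add0n; lia.
Qed.

Definition phi G x : seq bool * seq bool :=
  ([seq inS G (mult G + i) | i <- iota 1 (x - 2 * mult G).-1],
   [seq inS G (mult G + i) | i <- iota (x - 2 * mult G).+1 (mult G - (x - 2 * mult G).+1)]).

Lemma phi_spec g G x : inB g G -> min_gen G x -> 2 * mult G <= x ->
  [/\ 0 < x - 2 * mult G < mult G,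
      sG G = true :: (phi G x).1 ++ false :: (phi G x).2 & pd (phi G x).1].
Proof.
move=> HG Hmg Hx; have [M1 Mm Mlt] := mult_props G.
have H3 := mg_lt3 HG Hmg.
set m := mult G in M1 Mm Mlt H3 Hx *.
set y := x - 2 * m.
have Hy0 : 0 < y.
  rewrite lt0n; apply/negP => /eqP Hy.
  apply: (mg_no (a := m) Hmg); [lia | done | ].
  by have -> : x - m = m by rewrite /y in Hy; lia.
have Hym : y < m by rewrite /y; lia.
have Hfy : inS G (m + y) = false.
  apply/negbTE/negP => Sy; apply: (mg_no (a := m) Hmg); [lia | done | ].
  by have -> : x - m = m + y by rewrite /y; lia.
split => //; first by rewrite Hy0.
  rewrite /sG /phi /= -/m -/y.
  have E : iota 0 m = [:: 0] ++ iota 1 y.-1 ++ [:: y] ++ iota y.+1 (m - y.+1).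
    rewrite {1}(_ : m = ((1 + y.-1) + 1) + (m - y.+1)); last by lia.
    rewrite !iotaD /= -!catA /=.
    have -> : 1 + y.-1 = y by lia.
    by rewrite !add0n addn1.
  rewrite E !map_cat /= addn0 Mm.
  by rewrite Hfy.
move=> i; rewrite /phi /= -/m -/y size_map size_iota => Hi.
rewrite (nth_map 0) ?size_iota // (nth_map 0) ?size_iota; last by lia.
rewrite !nth_iota //; last by lia.
apply/negP => /andP [S1 S2].
apply: (mg_no (a := m + (1 + i)) Hmg); [lia | done | ].
by have -> : x - (m + (1 + i)) = m + (1 + (y.-1 - 1 - i)) by rewrite /y; lia.
Qed.

Definition T g := flatten [seq [seq (q, suf) | q <- vq j, suf <- astrs (g.-2 - j)]
                          | j <- iota 0 g.-1].

Lemma size_T g : size (T g) = D g.-1.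
Proof.
rewrite /T size_flatten /shape -map_comp sumnE big_map /D.
rewrite /index_iota subn0; apply: eq_big_seq => j; rewrite mem_iota => Hj /=.
rewrite size_allpairs size_astrs /K; congr (_ * fib _); lia.
Qed.

Lemma mem_T g q suf : pd q -> wt q + wt suf + 3 = g.+1 -> (q, suf) \in T g.
Proof.
move=> Hq Hw; apply/flattenP.
exists [seq (q0, s0) | q0 <- vq (wt q), s0 <- astrs (g.-2 - wt q)].
  by apply/mapP; exists (wt q) => //; rewrite mem_iota; lia.
apply/allpairsP; exists (q, suf) => /=; split => //; first exact: vq_complete.
by rewrite (_ : g.-2 - wt q = wt suf); [exact: astrs_complete | lia].
Qed.

Theorem proposition4p1 (g : nat) (L : seq (seq nat)) :
  uniq L -> (forall G, G \in L -> inB g G) ->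
  \sum_(G <- L) e2 G <= 2 * fib g.+1.
Proof.
move=> UL HL.
pose tl := fun G => [seq x <- iota (2 * mult G) (mult G) | min_gen G x].
pose PL := [seq (G, x) | G <- L, x <- tl G].
apply: (@leq_trans (size PL)).
  rewrite size_allpairs_dep sumnE big_map big_seq [X in _ <= X]big_seq.
  apply: leq_sum => G HG; rewrite size_filter; exact: e2_le (HL G HG).
have UPL : uniq PL.
  apply: allpairs_uniq_dep => //.
    move=> G _; apply: filter_uniq; exact: iota_uniq.
  by move=> [a b] [c d] _ _ /= [-> ->].
have memPL : forall p, p \in PL -> [/\ p.1 \in L, min_gen p.1 p.2 & 2 * mult p.1 <= p.2].
  move=> p /allpairsPdep [G [x [HG Hx ->]]] /=; move: Hx.
  by rewrite mem_filter mem_iota => /andP [-> /andP [-> _]].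
pose f := fun p : seq nat * nat => phi p.1 p.2.
have Hinj : {in PL &, injective f}.
  move=> [G x] [G' x'] /memPL [/= HG Hm Hx] /memPL [/= HG' Hm' Hx'] /= E.
  have [Hy E1 _] := phi_spec (HL _ HG) Hm Hx.
  have [Hy' E2 _] := phi_spec (HL _ HG') Hm' Hx'.
  have E' : phi G x = phi G' x' := E.
  have ES : sG G = sG G' by rewrite E1 E2 E'.
  have EG := sG_inj (HL _ HG) (HL _ HG') ES.
  subst G'; congr pair.
  have : size (phi G x).1 = size (phi G x').1 by rewrite /f /= in E; rewrite E.
  rewrite /phi /= !size_map !size_iota; lia.
rewrite -(size_map f).
apply: (@leq_trans (size (T g))).
  apply: uniq_leq_size; first by rewrite map_inj_in_uniq.
  move=> z /mapP [[G x] Hp ->]; have [/= HG Hm Hx] := memPL _ Hp.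
  have [Hy E1 Hpd] := phi_spec (HL _ HG) Hm Hx.
  have Hw : wt (true :: (phi G x).1 ++ false :: (phi G x).2) = g.+1.
    by rewrite -E1; exact: wt_sG (HL _ HG).
  move: Hpd Hw; rewrite /f; case: (phi G x) => q suf /= Hpd.
  rewrite wt_cat /= => Hw.
  apply: mem_T => //; lia.
rewrite size_T; case: g {HL} => [|g]; first by rewrite /D big_geq.
exact: Dbound.
Qed.
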